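(* Assume Assumption 1, Assumption 2 and the null hypothesis $H_0:\ T_i(1)=T_i(0)$ for all $i$, and condition on $\boldsymbol{T}(1),\boldsymbol{T}(0)$. Then for each $1\le k\le K$, $$\mathbb{E}\{D_k(N_k-D_k)\mid\boldsymbol{T}(1),\boldsymbol{T}(0),N_k\}=N_k(N_k-1)h_k(1-h_k)\frac{n_k}{n_k-1},$$ $$\mathbb{E}\{N_{1k}(N_k-N_{1k})\mid\boldsymbol{T}(1),\boldsymbol{T}(0),N_k\}=N_k(N_k-1)\phi_k(1-\phi_k).$$
   Context: There are $n$ units. Unit $i$ has potential event times $T_i(1),T_i(0)\ge 0$, potential censoring times $C_i(1),C_i(0)\in[0,\infty]$, and treatment indicator $Z_i\in\{0,1\}$; bold letters denote $n$-vectors. Assumption 1: conditional on $\boldsymbol{T}(1),\boldsymbol{T}(0),\boldsymbol{C}(1),\boldsymbol{C}(0)$, the $Z_i$ are i.i.d. Bernoulli$(p_1)$, $p_1=1-p_0\in(0,1)$. Assumption 2: $(\boldsymbol{C}(1),\boldsymbol{C}(0))$ is independent of $(\boldsymbol{T}(1),\boldsymbol{T}(0))$ and the pairs $(C_i(1),C_i(0))$ are i.i.d. across $i$. $G_z(c)=\Pr(C_i(z)\ge c)$, $G(t)=p_1G_1(t)+p_0G_0(t)$. Realized: $W_i=\min\{T_i,C_i\}$, $\Delta_i=\mathbb{1}(T_i\le C_i)$ with $T_i=Z_iT_i(1)+(1-Z_i)T_i(0)$, $C_i=Z_iC_i(1)+(1-Z_i)C_i(0)$. Let $t_1<\dots<t_K$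 be the distinct values of $\{T_i(0)\}$, $d_k=\#\{i:T_i(0)=t_k\}$, $n_k=\#\{i:T_i(0)\ge t_k\}$, $h_k=d_k/n_k$, $\phi_k=p_1G_1(t_k)/G(t_k)$; $N_{1k}=\sum_iZ_i\mathbb{1}(W_i\ge t_k)$, $N_k=\sum_i\mathbb{1}(W_i\ge t_k)$, $D_k=\sum_i\Delta_i\mathbb{1}(W_i=t_k)$. Convention $0/0:=0$. *)

(* Defs.v *)
From HB Require Import structures.
From mathcomp Require Import all_boot all_order all_algebra.
From mathcomp Require Import all_classical all_reals all_analysis measurable_realfun.
Set Implicit Arguments. Unset Strict Implicit. Unset Printing Implicit Defensive.
Import Order.TTheory GRing.Theory Num.Theory.
Local Open Scope classical_set_scope.
Local Open Scope ring_scope.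

Section SurvivalDefs.
Context {R : realType} {d : measure_display} {Omega : measurableType d}.
Variable P : probability Omega R.

(* Mutual independence of a finite family of classes of events:
   product rule for every choice of one event from each class
   (each class below contains setT, so subfamilies are covered). *)
Definition mutually_independent (I : finType) (F : I -> set (set Omega)) :=
  forall A : I -> set Omega, (forall i, F i (A i)) ->
    P (\bigcap_(i in [set: I]) A i) = (\prod_(i : I) P (A i))%E.

Definition sigma_bool (X : Omega -> bool) : set (set Omega) :=
  [set B | exists b : set bool, B = X @^-1` b].

Definition sigma_pair (X Y : Omega -> \bar R) : set (set Omega) :=
  [set B | exists A : set (\bar R * \bar R), measurable A /\
           B = (fun w => (X w, Y w)) @^-1` A].

Definition units_family n (Z : 'I_n -> Omega -> bool)
  (C1 C0 : 'I_n -> Omega -> \bar R) : 'I_n + 'I_n -> set (set Omega) :=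
  fun j => match j with
           | inl i => sigma_bool (Z i)
           | inr i => sigma_pair (C1 i) (C0 i)
           end.

(* G_z(c) = Pr(C_i(z) >= c), computed at unit i (i.i.d. => independent of i) *)
Definition Gsurv (C : Omega -> \bar R) (c : R) : R :=
  fine (P [set w | (c%:E <= C w)%E]).

(* E{ X | N } = f(N) for a nat-valued N: the defining property of the
   conditional expectation on sigma(N), whose atoms are the events {N = m}. *)
Definition cond_exp_nat_is (X : Omega -> R) (N : Omega -> nat) (f : nat -> R) :=
  forall m : nat,
    (\int[P]_(w in [set: Omega]) (X w * (N w == m)%:R)%:E
     = (f m)%:E * P [set w | N w = m])%E.

End SurvivalDefs.

Section Data.
Context {R : realType} {Omega : Type}.
Variable n : nat.
Variable T1 T0 : 'I_n -> R.
Variable Z : 'I_n -> Omega -> bool.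
Variable C1 C0 : 'I_n -> Omega -> \bar R.

(* distinct values t_1 < ... < t_K of {T_i(0)} (0-indexed here) *)
Definition tvals : seq R := sort <=%R (undup [seq T0 i | i <- enum 'I_n]).
Definition Kn : nat := size tvals.
Definition tk (k : nat) : R := nth 0 tvals k.
Definition dk (k : nat) : nat := #|[set i : 'I_n | T0 i == tk k]|.
Definition nk (k : nat) : nat := #|[set i : 'I_n | tk k <= T0 i]|.
Definition hk (k : nat) : R := (dk k)%:R / (nk k)%:R.

Definition Treal (i : 'I_n) (w : Omega) : R := if Z i w then T1 i else T0 i.
Definition Creal (i : 'I_n) (w : Omega) : \bar R := if Z i w then C1 i w else C0 i w.
Definition Wreal (i : 'I_n) (w : Omega) : \bar R := Order.min (Treal i w)%:E (Creal i w).
Definition Delta (i : 'I_n) (w : Omega) : bool := ((Treal i w)%:E <= Creal i w)%E.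

Definition N1k (k : nat) (w : Omega) : nat :=
  #|[set i : 'I_n | Z i w && ((tk k)%:E <= Wreal i w)%E]|.
Definition Nk (k : nat) (w : Omega) : nat :=
  #|[set i : 'I_n | ((tk k)%:E <= Wreal i w)%E]|.
Definition Dk (k : nat) (w : Omega) : nat :=
  #|[set i : 'I_n | Delta i w && (Wreal i w == (tk k)%:E)]|.
End Data.

(* Main.v *)
Require Import Defs.
From HB Require Import structures.
From mathcomp Require Import all_boot all_order all_algebra.
From mathcomp Require Import all_classical all_reals all_analysis measurable_realfun.
From mathcomp Require Import fingroup perm.
From mathcomp Require Import ring lra.
Import Order.TTheory GRing.Theory Num.Theory.
Local Open Scope ring_scope.
Set Implicit Arguments. Unset Strict Implicit.

Section Fin.
Variables (R : realFieldType) (n : nat) (s e : 'I_n -> bool) (pi : bool * bool -> R).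
Local Notation V := {ffun 'I_n -> bool * bool}.
Definition wt (v : V) := \prod_i pi (v i).
Definition Nf (v : V) : nat := \sum_i (s i && (v i).2 : nat).
Definition rr i (v : V) : R := (s i && (v i).2)%:R.
Definition Qf (m : nat) (i j : 'I_n) := \sum_(v : V) rr i v * rr j v * ((Nf v == m)%:R * wt v).
Definition Pm (m : nat) := \sum_(v : V) (Nf v == m)%:R * wt v.

Lemma Nf_R v : (Nf v)%:R = \sum_i rr i v :> R.
Proof. by rewrite /Nf natr_sum. Qed.

Lemma rr01 i v : rr i v * rr i v = rr i v.
Proof. by rewrite /rr; case: (_ && _); rewrite ?mulr1 ?mulr0. Qed.

Lemma pairs (m : nat) : \sum_i \sum_j (i != j)%:R * Qf m i j = (m%:R * (m%:R - 1)) * Pm m.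
Proof.
rewrite /Qf /Pm.
under eq_bigr => i _ do under eq_bigr => j _ do rewrite big_distrr /=.
under eq_bigr => i _ do rewrite exchange_big /=.
rewrite exchange_big /= big_distrr /=; apply: eq_bigr => v _.
under eq_bigr => i _ do under eq_bigr => j _ do rewrite mulrA.
under eq_bigr => i _ do rewrite -big_distrl /=.
rewrite -big_distrl /=.
have -> : \sum_i \sum_j (i != j)%:R * (rr i v * rr j v) =
          (Nf v)%:R * ((Nf v)%:R - 1) :> R.
  transitivity (\sum_i rr i v * ((Nf v)%:R - rr i v)).
    apply: eq_bigr => i _; rewrite Nf_R (bigD1 i) //= eqxx mul0r add0r.
    rewrite [X in _ = _ * (X - _)](bigD1 i) //= addrC addrK big_distrr /=.
    by apply: eq_bigr => j; rewrite eq_sym => ->; rewrite mul1r.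
  under eq_bigr => i _ do rewrite mulrBr rr01.
  by rewrite sumrB -big_distrl /= -Nf_R mulrBr mulr1.
case E: (_ == m); last first.
  by rewrite mul0r !mulr0.
by rewrite (eqP E).
Qed.

Definition permv (a b : 'I_n) (v : V) : V := [ffun l => v (tperm a b l)].

Lemma permvK a b : involutive (permv a b).
Proof. by move=> v; apply/ffunP => l; rewrite !ffunE tpermK. Qed.

Lemma wt_perm a b v : wt (permv a b v) = wt v.
Proof.
rewrite /wt [RHS](reindex_inj (@perm_inj _ (tperm a b))) /=.
by apply: eq_bigr => i _; rewrite ffunE.
Qed.

Lemma s_tperm a b i : s a = s b -> s (tperm a b i) = s i.
Proof. by move=> sab; case: tpermP => [->|->|]. Qed.

Lemma Nf_perm a b v : s a = s b -> Nf (permv a b v) = Nf v.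
Proof.
move=> sab; rewrite /Nf [RHS](reindex_inj (@perm_inj _ (tperm a b))) /=.
by apply: eq_bigr => i _; rewrite ffunE s_tperm.
Qed.

Lemma rr_perm a b i v : s a = s b -> rr i (permv a b v) = rr (tperm a b i) v.
Proof. by move=> sab; rewrite /rr ffunE s_tperm. Qed.

Lemma Qf_perm m a b i j : s a = s b ->
  Qf m i j = Qf m (tperm a b i) (tperm a b j).
Proof.
move=> sab; rewrite /Qf (reindex_inj (inv_inj (permvK a b))) /=.
by apply: eq_bigr => v _; rewrite !rr_perm // Nf_perm // wt_perm.
Qed.

Lemma Qf_const m i j i' j' : s i -> s j -> i != j -> s i' -> s j' -> i' != j' ->
  Qf m i j = Qf m i' j'.
Proof.
move=> si sj nij si' sj' nij'.
have s1 : s i = s i' by rewrite si si'.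
rewrite (Qf_perm m i j s1) tpermL.
set j1 := tperm i i' j.
have sj1 : s j1 = s j' by rewrite /j1 s_tperm // sj sj'.
have nj1 : i' != j1.
  by rewrite /j1 -{1}(tpermL i i') (inj_eq (@perm_inj _ _)).
rewrite (Qf_perm m i' j1 sj1) tpermL tpermD // eq_sym //.
Qed.

Lemma Qf_out m i j : ~~ s j -> Qf m i j = 0.
Proof.
move=> nsj; rewrite /Qf big1 // => v _.
by rewrite /rr (negbTE nsj) /= mulr0 mul0r.
Qed.

Lemma Qf_out1 m i j : ~~ s i -> Qf m i j = 0.
Proof.
move=> nsi; rewrite /Qf big1 // => v _.
by rewrite /rr (negbTE nsi) /= !mul0r.
Qed.

Definition flipz (i : 'I_n) (v : V) : V :=
  [ffun l => if l == i then (~~ (v i).1, (v i).2) else v l].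

Lemma flipz_at i v : flipz i v i = (~~ (v i).1, (v i).2).
Proof. by rewrite ffunE eqxx. Qed.

Lemma flipz_off i v l : l != i -> flipz i v l = v l.
Proof. by rewrite ffunE => /negbTE ->. Qed.

Lemma flipzK i : involutive (flipz i).
Proof.
move=> v; apply/ffunP => l; rewrite [LHS]ffunE.
case: eqP => [->|/eqP nli]; last by rewrite flipz_off.
by rewrite flipz_at negbK; case: (v i).
Qed.

Lemma flipz_snd i v l : (flipz i v l).2 = (v l).2.
Proof. by rewrite ffunE; case: eqP => // ->. Qed.

Lemma Nf_flipz i v : Nf (flipz i v) = Nf v.
Proof. by apply: eq_bigr => l _; rewrite flipz_snd. Qed.

Lemma wt_split i v : wt v = pi (v i) * \prod_(l | l != i) pi (v l).
Proof. by rewrite /wt (bigD1 i). Qed.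

Lemma flipz_rel i (K : V -> R) (HK : forall v, K (flipz i v) = K v) :
  pi (false,true) * \sum_(v : V) (v i == (true,true))%:R * K v * wt v =
  pi (true,true) * \sum_(v : V) (v i == (false,true))%:R * K v * wt v.
Proof.
rewrite [in RHS](reindex_inj (inv_inj (flipzK i))) /= !big_distrr /=.
apply: eq_bigr => v _.
rewrite flipz_at HK.
have -> : ((~~ (v i).1, (v i).2) == (false,true)) = (v i == (true,true)).
  by case: (v i) => [[] []].
case E: (v i == (true,true)); last by rewrite !mul0r !mulr0.
rewrite (wt_split i v) (wt_split i (flipz i v)) flipz_at (eqP E) /=.
have -> : \prod_(l | l != i) pi (flipz i v l) = \prod_(l | l != i) pi (v l).
  by apply: eq_bigr => l; move/flipz_off ->.
ring.
Qed.

Lemma extract i (K : V -> R) (HK : forall v, K (flipz i v) = K v)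
  (pi0 : forall x, 0 <= pi x) :
  let phi := pi (true,true) / (pi (true,true) + pi (false,true)) in
  \sum_(v : V) (v i == (true,true))%:R * K v * wt v
    = phi * \sum_(v : V) ((v i).2)%:R * K v * wt v
  /\ \sum_(v : V) (v i == (false,true))%:R * K v * wt v
    = (1 - phi) * \sum_(v : V) ((v i).2)%:R * K v * wt v.
Proof.
move=> phi.
set A := \sum_(v : V) (v i == (true,true))%:R * K v * wt v.
set B := \sum_(v : V) (v i == (false,true))%:R * K v * wt v.
have -> : \sum_(v : V) ((v i).2)%:R * K v * wt v = A + B.
  rewrite /A /B -big_split /=; apply: eq_bigr => v _.
  by case: (v i) => [[] []] /=; rewrite ?mul0r ?mul1r ?add0r ?addr0.
have rel := flipz_rel HK; rewrite -/A -/B in rel.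
have [H0|Hne] := eqVneq (pi (true,true) + pi (false,true)) 0.
  move/eqP: H0; rewrite paddr_eq0 // => /andP[/eqP a0 /eqP b0].
  have vanish x : pi x = 0 -> \sum_(v : V) (v i == x)%:R * K v * wt v = 0.
    move=> px; apply: big1 => v _.
    case E: (v i == x); last by rewrite !mul0r.
    by rewrite (wt_split i v) (eqP E) px !mul0r mulr0.
  rewrite /A /B !vanish // addr0 !mulr0; split=> //.
have e1 : 1 - phi = pi (false,true) / (pi (true,true) + pi (false,true)).
  by rewrite /phi; field.
rewrite e1 /phi; split.
  rewrite mulrAC; apply: (mulIf Hne); rewrite divfK //.
  by rewrite mulrDr (mulrC A (pi (false,true))) rel; ring.
rewrite mulrAC; apply: (mulIf Hne); rewrite divfK //.
by rewrite mulrDr (mulrC B (pi (true,true))) -rel; ring.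
Qed.

Definition N1f (v : V) : nat := \sum_i ((v i).1 && s i && (v i).2 : nat).

Lemma claim2 (m : nat) (pi0 : forall x, 0 <= pi x) :
  let phi := pi (true,true) / (pi (true,true) + pi (false,true)) in
  \sum_(v : V) ((N1f v)%:R * ((Nf v)%:R - (N1f v)%:R) * (Nf v == m)%:R) * wt v
  = (m%:R * (m%:R - 1) * phi * (1 - phi)) * Pm m.
Proof.
move=> phi.
pose a i (v : V) : R := ((v i).1 && s i && (v i).2)%:R.
pose b j (v : V) : R := (~~ (v j).1 && s j && (v j).2)%:R.
have eN1 v : (N1f v)%:R = \sum_i a i v by rewrite /N1f natr_sum.
have eN2 v : (Nf v)%:R - (N1f v)%:R = \sum_j b j v.
  rewrite Nf_R eN1 -sumrB; apply: eq_bigr => j _.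
  by rewrite /rr /a /b; case: (v j) => [[] []]; case: (s j); rewrite /= ?subr0 ?subrr.
transitivity (\sum_i \sum_j \sum_(v : V) a i v * b j v * ((Nf v == m)%:R * wt v)).
  symmetry; under eq_bigr => i _ do rewrite exchange_big /=.
  rewrite exchange_big /=; apply: eq_bigr => v _.
  rewrite -!mulrA eN2 eN1 [RHS]big_distrl /=; apply: eq_bigr => i _.
  rewrite big_distrl big_distrr /=; apply: eq_bigr => j _; ring.
have -> : m%:R * (m%:R - 1) * phi * (1 - phi) * Pm m
  = phi * (1 - phi) * (m%:R * (m%:R - 1) * Pm m) by ring.
rewrite -(pairs m) big_distrr /=.
apply: eq_bigr => i _; rewrite big_distrr /=; apply: eq_bigr => j _.
have [<-|nij] := eqVneq i j.
  rewrite mul0r mulr0 big1 // => v _.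
  by rewrite /a /b; case: ((v i).1); rewrite /= ?andbF ?mul0r ?mulr0 ?mul0r.
have [si|nsi] := boolP (s i); last first.
  rewrite Qf_out1 // !mulr0 big1 // => v _.
  by rewrite /a (negbTE nsi) andbF /= !mul0r.
have [sj|nsj] := boolP (s j); last first.
  rewrite Qf_out // !mulr0 big1 // => v _.
  by rewrite /b (negbTE nsj) andbF /= mulr0 mul0r.
rewrite mul1r.
pose K1 (v : V) : R := (v j == (false,true))%:R * (Nf v == m)%:R.
have HK1 v : K1 (flipz i v) = K1 v by rewrite /K1 flipz_off 1?eq_sym // Nf_flipz.
have e1 : \sum_(v : V) a i v * b j v * ((Nf v == m)%:R * wt v)
   = \sum_(v : V) (v i == (true,true))%:R * K1 v * wt v.
  apply: eq_bigr => v _; rewrite /a /b /K1 si sj /=.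
  rewrite -!mulrA; congr (_ * _).
    by case: (v i) => [[] []].
  by congr (_ * _); case: (v j) => [[] []].
rewrite e1 (proj1 (extract HK1 pi0)) -/phi.
pose K2 (v : V) : R := ((v i).2)%:R * (Nf v == m)%:R.
have HK2 v : K2 (flipz j v) = K2 v by rewrite /K2 flipz_off // Nf_flipz.
have e2 : \sum_(v : V) ((v i).2)%:R * K1 v * wt v
   = \sum_(v : V) (v j == (false,true))%:R * K2 v * wt v.
  by apply: eq_bigr => v _; rewrite /K1 /K2; ring.
rewrite e2 (proj2 (extract HK2 pi0)) -/phi -mulrA; congr (_ * (_ * _)).
apply: eq_bigr => v _; rewrite /K2 /rr si sj /=; ring.
Qed.

Definition Df (v : V) : nat := \sum_i (e i && (v i).2 : nat).

Lemma boolR (b : bool) : (b%:R : R) = if b then 1 else 0.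
Proof. by case: b. Qed.

Lemma sum_card (b : 'I_n -> bool) : \sum_i (b i)%:R = #|[set i | b i]|%:R :> R.
Proof.
rewrite -sum1_card natr_sum [RHS]big_mkcond /=; apply: eq_bigr => i _.
by rewrite inE; case: (b i).
Qed.

Lemma card_finset (b : 'I_n -> bool) : #|[set i | b i]| = \sum_i (b i : nat).
Proof.
rewrite -sum1_card [LHS]big_mkcond /=; apply: eq_bigr => i _.
by rewrite inE; case: (b i).
Qed.

Lemma claim1 (m : nat) (es : forall i, e i -> s i) :
  let nn := #|[set i | s i]| in
  let h := #|[set i | e i]|%:R / nn%:R in
  \sum_(v : V) ((Df v)%:R * ((Nf v)%:R - (Df v)%:R) * (Nf v == m)%:R) * wt v
  = (m%:R * (m%:R - 1) * h * (1 - h) * (nn%:R / (nn%:R - 1))) * Pm m.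
Proof.
move=> nn h.
set dd := #|[set i | e i]|.
have eD v : (Df v)%:R = \sum_i (e i)%:R * rr i v.
  rewrite /Df natr_sum; apply: eq_bigr => i _; rewrite /rr.
  by case E: (e i); rewrite ?(es _ E) /= ?mul1r ?mul0r.
have eD2 v : (Nf v)%:R - (Df v)%:R = \sum_j (1 - (e j)%:R) * rr j v.
  rewrite Nf_R eD -sumrB; apply: eq_bigr => j _; by rewrite mulrBl mul1r.
transitivity (\sum_i \sum_j (e i)%:R * (1 - (e j)%:R) * Qf m i j).
  symmetry; rewrite /Qf.
  under eq_bigr => i _ do under eq_bigr => j _ do rewrite big_distrr /=.
  under eq_bigr => i _ do rewrite exchange_big /=.
  rewrite exchange_big /=; apply: eq_bigr => v _.
  rewrite -!mulrA eD2 eD [RHS]big_distrl /=; apply: eq_bigr => i _.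
  rewrite big_distrl big_distrr /=; apply: eq_bigr => j _; ring.
have dle : (dd <= nn)%N.
  by apply: subset_leq_card; apply/fintype.subsetP => i; rewrite !inE; apply: es.
have [n2|n1] := leqP 2 nn.
  have [i0 si0] : exists i0, s i0.
    have : (0 < nn)%N by apply: leq_trans n2.
    by case/card_gt0P => i0; rewrite inE => ?; exists i0.
  have [j0 /andP[nji sj0]] : exists j0, (j0 != i0) && s j0.
    have : (0 < #|[set i | s i] :\ i0|)%N.
      by have := n2; rewrite /nn (cardsD1 i0) inE si0 add1n ltnS.
    by case/card_gt0P => j0; rewrite !inE => ?; exists j0.
  set q := Qf m j0 i0.
  have eQ i j : i != j -> Qf m i j = ((s i) && (s j))%:R * q.
    move=> nij; have [si|nsi] := boolP (s i); last by rewrite Qf_out1 // mul0r.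
    have [sj|nsj] := boolP (s j); last by rewrite Qf_out // andbF mul0r.
    by rewrite /= mul1r (Qf_const m si sj nij sj0 si0 nji).
  have hp := pairs m.
  have eP : \sum_i \sum_j (i != j)%:R * Qf m i j = (nn%:R * nn%:R - nn%:R) * q.
    transitivity (\sum_i \sum_j (i != j)%:R * ((s i) && (s j))%:R * q).
      apply: eq_bigr => i _; apply: eq_bigr => j _.
      by case: eqVneq => [->|nij]; rewrite ?mul0r // eQ // mulrA.
    under eq_bigr => i _ do rewrite -big_distrl /=.
    rewrite -big_distrl /=; congr (_ * _).
    have ns : \sum_j (s j)%:R = nn%:R :> R by rewrite sum_card.
    transitivity (\sum_i ((s i)%:R * nn%:R - (s i)%:R :> R)); last first.
      by rewrite sumrB -big_distrl /= ns.
    apply: eq_bigr => i _.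
    have ss : (s i)%:R * (s i)%:R = (s i)%:R :> R.
      by case: (s i); rewrite ?mulr1 ?mulr0.
    rewrite (bigD1 i) //= eqxx mul0r add0r -ns [X in _ = _ * X - _](bigD1 i) //= mulrDr ss.
    rewrite addrAC subrr add0r big_distrr /=; apply: eq_bigr => j nji'.
    by rewrite eq_sym nji' mul1r; case: (s i); case: (s j); rewrite /= ?mulr0 ?mulr1 ?mul1r ?mul0r.
  rewrite eP in hp.
  have -> : \sum_i \sum_j (e i)%:R * (1 - (e j)%:R) * Qf m i j
            = dd%:R * (nn%:R - dd%:R) * q.
    transitivity (\sum_i \sum_j (e i)%:R * ((1 - (e j)%:R) * (s j)%:R) * q).
      apply: eq_bigr => i _; apply: eq_bigr => j _.
      case Ei: (e i); last by rewrite !mul0r.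
      case Ej: (e j); first by rewrite !boolR; ring.
      have nij : i != j by apply/eqP => eij; rewrite eij Ej in Ei.
      by rewrite eQ // es //=; ring.
    under eq_bigr => i _ do rewrite -big_distrl /=.
    rewrite -big_distrl /=; congr (_ * _).
    under eq_bigr => i _ do rewrite -big_distrr /=.
    rewrite -big_distrl /= sum_card; congr (_ * _).
    rewrite -!sum_card -sumrB; apply: eq_bigr => j _.
    by case E: (e j); rewrite ?(es _ E) !boolR /=; ring.
  have nn0 : nn%:R != 0 :> R by rewrite pnatr_eq0 -lt0n; apply: leq_trans n2.
  have nn1 : nn%:R - 1 != 0 :> R.
    by rewrite subr_eq0 pnatr_eq1 neq_ltn n2 orbT.
  have X0 : nn%:R * nn%:R - nn%:R != 0 :> R.
    have -> : nn%:R * nn%:R - nn%:R = nn%:R * (nn%:R - 1) :> R by ring.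
    by rewrite mulf_neq0.
  have eq : q = m%:R * (m%:R - 1) * Pm m / (nn%:R * nn%:R - nn%:R).
    by rewrite -hp mulrAC mulfV ?mul1r.
  rewrite eq /h; field.
  by rewrite nn0 nn1 X0.
rewrite big1; last first.
  move=> i _; apply: big1 => j _.
  case Ei: (e i); last by rewrite !mul0r.
  case Ej: (e j); first by rewrite subrr mulr0 mul0r.
  have nij : i != j by apply/eqP => eij; rewrite eij Ej in Ei.
  have [sj|nsj] := boolP (s j); last by rewrite Qf_out // mulr0.
  have : (2 <= nn)%N.
    apply: (@leq_trans #|[set i; j]|); first by rewrite cards2 nij.
    apply: subset_leq_card.
    apply/fintype.subsetP => x; rewrite !inE.
    by case/orP => /eqP ->; [apply: es; rewrite Ei | exact: sj].
  by move=> h2; rewrite ltnNge h2 in n1.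
rewrite /h; have : (nn = 0 \/ nn = 1)%N by case: (nn) n1 => [|[|]] //; auto.
case=> ->.
  by rewrite (_ : (0%N)%:R = 0 :> R) // invr0; ring.
by rewrite (_ : (1%N)%:R = 1 :> R) // subrr invr0; ring.
Qed.
End Fin.

Local Open Scope classical_set_scope.
Local Open Scope ring_scope.

Section Meas.
Variables (R : realType) (d : measure_display) (Omega : measurableType d).
Variables (P : probability Omega R) (Yt : finType) (V : Omega -> Yt).
Hypothesis mV : forall y, measurable (V @^-1` [set y]).

Lemma mVA (A : set Yt) : measurable (V @^-1` A).
Proof.
have -> : V @^-1` A = \bigcup_(y in A) V @^-1` [set y].
  by apply/seteqP; split => w /=; [move=> Aw; exists (V w) | case=> y Ay /= ->].
exact: fin_bigcup_measurable finite_finset (fun y _ => mV y).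
Qed.

Lemma int_fin (F : Yt -> R) (F0 : forall y, 0 <= F y) :
  (\int[P]_(w in [set: Omega]) (F (V w))%:E =
   \sum_y (F y)%:E * P (V @^-1` [set y]))%E.
Proof.
have -> : (fun w => (F (V w))%:E) =
          (fun w => \sum_y (F y * \1_(V @^-1` [set y]) w)%:E)%E.
  apply/funext => w; rewrite (bigD1 (V w)) //= big1 ?adde0.
    by rewrite indicE mem_set // mulr1.
  move=> y ny; rewrite indicE memNset ?mulr0 //.
  by move=> /= e; rewrite e eqxx in ny.
rewrite ge0_integral_sum //.
- apply: eq_bigr => y _.
  transitivity (\int[P]_(w in [set: Omega])
                  ((F y)%:E * (\1_(V @^-1` [set y]) w)%:E))%E.
    by congr (integral _ _ _); apply/funext => w; rewrite EFinM.
  rewrite ge0_integralZl_EFin //.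
  + by rewrite integral_indic // setIT.
  + by apply/measurable_EFinP; apply: measurable_indic.
- move=> y; apply/measurable_EFinP; apply: measurable_funM.
    exact: measurable_cst.
  exact: measurable_indic.
- by move=> y w _; rewrite lee_fin mulr_ge0 // indicE.
Qed.
End Meas.

Unset Implicit Arguments. Set Strict Implicit.

Theorem lemmaA5 (R : realType) (d : measure_display) (Omega : measurableType d)
  (P : probability Omega R) (n : nat) (T1 T0 : 'I_n -> R)
  (Z : 'I_n -> Omega -> bool) (C1 C0 : 'I_n -> Omega -> \bar R) (p1 : R) :
  (* potential outcomes and censoring times *)
  (forall i, 0 <= T1 i) -> (forall i, 0 <= T0 i) ->
  (forall i w, (0 <= C1 i w)%E) -> (forall i w, (0 <= C0 i w)%E) ->
  (forall i, measurable (Z i @^-1` [set true])) ->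
  (forall i, measurable_fun [set: Omega] (C1 i)) ->
  (forall i, measurable_fun [set: Omega] (C0 i)) ->
  (* Assumptions 1 and 2 (given T(1), T(0)): Z_1..Z_n i.i.d. Bernoulli(p1),
     independent of the censoring pairs, which are i.i.d. across units *)
  0 < p1 < 1 ->
  mutually_independent P (units_family Z C1 C0) ->
  (forall i, P (Z i @^-1` [set true]) = p1%:E) ->
  (forall i j (A : set (\bar R * \bar R)), measurable A ->
     P ((fun w => (C1 i w, C0 i w)) @^-1` A)
     = P ((fun w => (C1 j w, C0 j w)) @^-1` A)) ->
  (* null hypothesis H0 *)
  (forall i, T1 i = T0 i) ->
  forall (k : nat), (k < Kn T0)%N ->
  let phik (i0 : 'I_n) :=
    p1 * Gsurv P (C1 i0) (tk T0 k) /
    (p1 * Gsurv P (C1 i0) (tk T0 k) + (1 - p1) * Gsurv P (C0 i0) (tk T0 k)) in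
  cond_exp_nat_is P
    (fun w => (Dk T1 T0 Z C1 C0 k w)%:R *
              ((Nk T1 T0 Z C1 C0 k w)%:R - (Dk T1 T0 Z C1 C0 k w)%:R))
    (Nk T1 T0 Z C1 C0 k)
    (fun m => m%:R * (m%:R - 1) * hk T0 k * (1 - hk T0 k) *
              ((nk T0 k)%:R / ((nk T0 k)%:R - 1)))
  /\ forall i0 : 'I_n,
  cond_exp_nat_is P
    (fun w => (N1k T1 T0 Z C1 C0 k w)%:R *
              ((Nk T1 T0 Z C1 C0 k w)%:R - (N1k T1 T0 Z C1 C0 k w)%:R))
    (Nk T1 T0 Z C1 C0 k)
    (fun m => m%:R * (m%:R - 1) * phik i0 * (1 - phik i0)).

Proof.
move=> T1ge0 T0ge0 C1ge0 C0ge0 mZ mC1 mC0 p1ab indep PZ iid H0 k kK phik.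
set t := tk T0 k.
pose rho i w := (t%:E <= Creal Z C1 C0 i w)%E.
pose V w : {ffun 'I_n -> bool * bool} := [ffun i => (Z i w, rho i w)].
pose s i := t <= T0 i.
pose e i := T0 i == t.
pose pairC i w := (C1 i w, C0 i w).
pose Aset (x : bool * bool) : set (\bar R * \bar R) :=
  [set c | (t%:E <= (if x.1 then c.1 else c.2))%E = x.2].
pose piF i (x : bool * bool) :=
  fine (P (Z i @^-1` [set x.1])) * fine (P (pairC i @^-1` Aset x)).
have mB (y : bool) : measurable [set c : \bar R | (t%:E <= c)%E = y].
  have m1 : measurable [set c : \bar R | (t%:E <= c)%E].
    by rewrite -set_itvcy; exact: emeasurable_itv.
  case: y; first exact: m1.
  have -> : [set c : \bar R | (t%:E <= c)%E = false] = ~` [set c | (t%:E <= c)%E].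
    by apply/seteqP; split => c /=; case: (_ <= _)%E.
  exact: measurableC.
have mAset x : measurable (Aset x).
  case: x => [[] y]; rewrite /Aset /=.
    by rewrite -[X in measurable X]setTI; exact: measurable_fst measurableT _ (mB y).
  by rewrite -[X in measurable X]setTI; exact: measurable_snd measurableT _ (mB y).
have Zf i : Z i @^-1` [set false] = ~` (Z i @^-1` [set true]).
  by apply/seteqP; split => w /=; case: (Z i w).
have mZb i b : measurable (Z i @^-1` [set b]).
  by case: b; [exact: mZ | rewrite Zf; exact: measurableC].
have mpair i A : measurable A -> measurable (pairC i @^-1` A).
  move=> mA.
  by rewrite -[X in measurable X]setTI; exact: measurable_fun_pair (mC1 i) (mC0 i) measurableT _ mA.
pose Aj (v : {ffun 'I_n -> bool * bool}) (j : 'I_n + 'I_n) :=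
  match j with
  | inl i => Z i @^-1` [set (v i).1]
  | inr i => pairC i @^-1` Aset (v i)
  end.
have setE v : V @^-1` [set v] = \bigcap_(j in [set: 'I_n + 'I_n]) Aj v j.
  apply/seteqP; split => w /=.
    move=> Vw j _; rewrite -Vw; case: j => i /=; rewrite ffunE //=.
  move=> H; apply/ffunP => i; rewrite ffunE.
  have h1 := H (inl i) I; have h2 := H (inr i) I; rewrite /= in h1 h2.
  by rewrite /rho /Creal h1 h2; case: (v i).
have mV v : measurable (V @^-1` [set v]).
  rewrite setE; apply: fin_bigcap_measurable; first exact: finite_finset.
  by case=> i _ /=; [exact: mZb | exact: mpair].
have fE B : measurable B -> P B = (fine (P B))%:E.
  by move=> mB'; rewrite fineK // fin_num_measure.
have lawi v : P (V @^-1` [set v]) = (\prod_i piF i (v i))%:E.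
  rewrite setE indep; last by case=> i /=; [exists [set (v i).1] | exists (Aset (v i))].
  rewrite big_sumType /=.
  rewrite (eq_bigr (fun i => (fine (P (Aj v (inl i))))%:E)); last first.
    by move=> i _; rewrite -fE //=; apply: mZb.
  rewrite [X in (_ * X)%E](eq_bigr (fun i => (fine (P (Aj v (inr i))))%:E)); last first.
    by move=> i _; rewrite -fE //=; apply: mpair.
  by rewrite !prodEFin -EFinM -big_split.
have PZb i b : P (Z i @^-1` [set b]) = (if b then p1 else 1 - p1)%:E.
  case: b; first exact: PZ.
  by rewrite Zf probability_setC ?mZ // PZ.
have piF_eq i j : piF i = piF j.
  apply/funext => x; rewrite /piF !PZb /pairC (iid i j) //.
have law i0 v : P (V @^-1` [set v]) = (\prod_i piF i0 (v i))%:E.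
  by rewrite lawi; congr (_%:E); apply: eq_bigr => i _; rewrite (piF_eq i i0).
have piF0 i0 x : 0 <= piF i0 x.
  by rewrite /piF mulr_ge0 // fine_ge0 // measure_ge0.
have card_sum (p : pred 'I_n) : #|[set i : 'I_n | p i]| = \sum_i (p i : nat).
  rewrite -sum1_card [LHS]big_mkcond /=; apply: eq_bigr => i _.
  have [pi|npi] := boolP (p i); first by rewrite mem_set.
  by rewrite memNset //=; apply/negP.
have TrE i w : Treal T1 T0 Z i w = T0 i by rewrite /Treal H0; case: ifP.
have eN w : Nk T1 T0 Z C1 C0 k w = Nf s (V w).
  rewrite /Nk card_sum /Nf; apply: eq_bigr => i _.
  by rewrite ffunE /= /Wreal TrE le_min lee_fin.
have eN1 w : N1k T1 T0 Z C1 C0 k w = N1f s (V w).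
  rewrite /N1k card_sum /N1f; apply: eq_bigr => i _.
  by rewrite ffunE /= /Wreal TrE le_min lee_fin andbA.
have eD w : Dk T1 T0 Z C1 C0 k w = Df e (V w).
  rewrite /Dk card_sum /Df; apply: eq_bigr => i _.
  rewrite ffunE /= /Delta /Wreal TrE /e /rho; congr nat_of_bool.
  have [le|lt] := leP ((T0 i)%:E) (Creal Z C1 C0 i w).
    rewrite eqe -/t /=; case: eqP => [eq|//]; by rewrite -eq le.
  rewrite -/t /=; have [eq|ne] := eqVneq (T0 i) t => //=.
  by rewrite -eq leNgt lt.
have [idx0 _] : exists i, T0 i = t.
  have : t \in tvals T0 by rewrite /t /tk mem_nth.
  by rewrite /tvals mem_sort mem_undup => /mapP [i _ ->]; exists i.
have key (F : {ffun 'I_n -> bool * bool} -> R) (i0 : 'I_n) : (forall v, 0 <= F v) ->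
  (\int[P]_(w in [set: Omega]) (F (V w))%:E = (\sum_v F v * wt (piF i0) v)%:E)%E.
  move=> F0; rewrite (@int_fin _ _ _ P _ V mV F F0).
  under eq_bigr => v _ do rewrite (law i0) -EFinM.
  by rewrite sumEFin.
have PN i0 m : P [set w | Nk T1 T0 Z C1 C0 k w = m] = (Pm s (piF i0) m)%:E.
  have -> : [set w | Nk T1 T0 Z C1 C0 k w = m] = V @^-1` [set v | Nf s v = m].
    by apply/seteqP; split=> w /=; rewrite eN.
  rewrite -(setIT (V @^-1` [set v | Nf s v = m])) -integral_indic //; last exact: mVA.
  transitivity (\int[P]_(w in [set: Omega]) ((Nf s (V w) == m)%:R)%:E)%E.
    congr (integral _ _ _); apply/funext => w; rewrite indicE.
    have [h|h] := eqVneq (Nf s (V w)) m; first by rewrite mem_set.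
    by rewrite memNset //= => /eqP; rewrite (negbTE h).
  by rewrite (key (fun v => ((Nf s v == m)%:R : R)) i0).
have es i : e i -> s i by rewrite /e /s => /eqP ->.
split.
  move=> m.
  pose G v := (Df e v)%:R * ((Nf s v)%:R - (Df e v)%:R) * (Nf s v == m)%:R :> R.
  have G0 v : 0 <= G v.
    rewrite /G !mulr_ge0 // subr_ge0 ler_nat; apply: leq_sum => i _.
    by case E: (e i); rewrite ?(es _ E).
  transitivity (\int[P]_(w in [set: Omega]) (G (V w))%:E)%E.
    by congr (integral _ _ _); apply/funext => w; rewrite /G eD eN.
  rewrite (key G idx0 G0) (PN idx0) -EFinM; congr (_%:E).
  rewrite /hk /nk /dk !card_sum.
  have := @claim1 _ _ s e (piF idx0) m es; rewrite /= !card_finset; exact.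
move=> i0 m.
pose G v := (N1f s v)%:R * ((Nf s v)%:R - (N1f s v)%:R) * (Nf s v == m)%:R :> R.
have G0 v : 0 <= G v.
  rewrite /G !mulr_ge0 // subr_ge0 ler_nat; apply: leq_sum => i _.
  by case: ((v i).1).
transitivity (\int[P]_(w in [set: Omega]) (G (V w))%:E)%E.
  by congr (integral _ _ _); apply/funext => w; rewrite /G eN1 eN.
rewrite (key G i0 G0) (PN i0) -EFinM; congr (_%:E).
have pi11 : piF i0 (true,true) = p1 * Gsurv P (C1 i0) t by rewrite /piF PZb.
have pi01 : piF i0 (false,true) = (1 - p1) * Gsurv P (C0 i0) t by rewrite /piF PZb.
have := @claim2 _ _ s (piF i0) m (piF0 i0); rewrite /= pi11 pi01 => ->.
by [].
Qed.
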